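(* (i) For all $i$, $n$, all $s,t\in\omega^n$ and all $\alpha,\beta$: $s\ast\alpha\sim^i_V t\ast\beta\leftrightarrow\alpha\sim^i_V\beta$. (ii) For all $i$ and all $\alpha,\beta$: $\alpha\sim^i_V\beta\rightarrow\alpha\sim^{i+1}_V\beta$. (iii) For all $i$ and all $\gamma$: $\neg\forall\alpha[\alpha\sim^{i+1}_V\gamma\rightarrow\alpha\sim^i_V\gamma]$. (iv) For all $i,j$ and all $\alpha,\beta,\gamma$: $(\alpha\sim^i_V\beta\wedge\beta\sim^j_V\gamma)\rightarrow\alpha\sim^{i+j}_V\gamma$. (v) $\sim^\omega_V$ is an equivalence relation on $\mathcal{N}$.
   Context: Intuitionistic mathematics (constructive reading of logical constants; Markov's Principle not assumed), with Brouwer's Continuity Principle as an axiom (for every $R\subseteq\mathcal{N}\times\omega$, if $\forall\alpha\exists n[\alpha Rn]$ then $\forall\alpha\exists m\exists n\forall\beta[\overline{\alpha}m\sqsubset\beta\rightarrow\beta Rn]$, where $\overline{\alpha}m=\langle\alpha(0),\dots,\alpha(m-1)\rangle$ and $\sqsubset$ is ''initial segment of''). $\mathcal{N}=\omega^\omega$; $\omega^n$ is the set of finite sequences of length $n$; $s\ast\alpha$ is $s$ followed by $\alpha$. Relations: $\alpha\sim^0_V\beta$ iff $\exists n\forall m>n[\alpha(m)=\beta(m)]$ (the Vitali relation); $\alpha\sim^{i+1}_V\beta$ iff $\exists n\forall m>n[\alpha(m)\neq\beta(m)\rightarrow\alpha\sim^i_V\beta]$; $\alpha\sim^\omega_V\beta$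 iff $\exists i[\alpha\sim^i_V\beta]$. *)

(* Defs.v *)
From Stdlib Require Import List Arith RelationClasses.
Import ListNotations.

Definition baire := nat -> nat.

Definition agree_upto (m : nat) (a b : baire) : Prop :=
  forall k, k < m -> a k = b k.

Definition BCP : Prop :=
  forall R : baire -> nat -> Prop,
    (forall a : baire, exists n, R a n) ->
    forall a : baire, exists m n, forall b : baire, agree_upto m a b -> R b n.

Definition fin_then (s : list nat) (a : baire) : baire :=
  fun k => if k <? length s then nth k s 0 else a (k - length s).

Fixpoint vit (i : nat) (a b : baire) : Prop :=
  match i with
  | 0 => exists n, forall m, n < m -> a m = b m
  | S i' => exists n, forall m, n < m -> (a m <> b m -> vit i' a b)
  end.

Definition vit_omega (a b : baire) : Prop := exists i, vit i a b.

(* Main.v *)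
Require Import Defs.
From Stdlib Require Import List Arith RelationClasses Lia.

Definition W (k : nat) (a b : baire) : Prop :=
  match k with 0 => False | S k' => vit k' a b end.

Lemma vit_alt : forall k a b,
  vit k a b <-> exists n, forall m, n < m -> a m <> b m -> W k a b.
Proof.
  intros [|k] a b; simpl; split; intros [n Hn]; exists n; intros m Hm.
  - intro E; exact (E (Hn m Hm)).
  - destruct (Nat.eq_dec (a m) (b m)) as [E|E]; [exact E|].
    destruct (Hn m Hm E).
  - exact (Hn m Hm).
  - exact (Hn m Hm).
Qed.

Lemma vit_ext : forall k a b a' b', (forall m, a m = a' m) -> (forall m, b m = b' m) ->
  vit k a b -> vit k a' b'.
Proof.
  induction k; intros a b a' b' Ha Hb H; apply vit_alt in H; apply vit_alt;
  destruct H as [n Hn]; exists n; intros m Hm E.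
  - rewrite <- Ha, <- Hb in E. exact (Hn m Hm E).
  - simpl. apply (IHk a b a' b' Ha Hb). rewrite <- Ha, <- Hb in E. exact (Hn m Hm E).
Qed.

Lemma vit_shift : forall k n a b a' b',
  (forall m, a' (m + n) = a m) -> (forall m, b' (m + n) = b m) ->
  (vit k a' b' <-> vit k a b).
Proof.
  induction k; intros n a b a' b' Ha Hb; split; intro H; apply vit_alt in H; apply vit_alt;
  destruct H as [N HN].
  - exists N. intros m Hm E. apply (HN (m + n)); [lia|]. rewrite Ha, Hb; exact E.
  - exists (N + n). intros m Hm E. apply (HN (m - n)); [lia|].
    replace m with (m - n + n) in E by lia. rewrite Ha, Hb in E; exact E.
  - exists N. intros m Hm E. simpl. apply (IHk n a b a' b' Ha Hb).
    apply (HN (m + n)); [lia|]. rewrite Ha, Hb; exact E.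
  - exists (N + n). intros m Hm E. simpl. apply (IHk n a b a' b' Ha Hb).
    apply (HN (m - n)); [lia|].
    replace m with (m - n + n) in E by lia. rewrite Ha, Hb in E; exact E.
Qed.

Lemma fin_then_tail : forall s a m, fin_then s a (m + length s) = a m.
Proof.
  intros s a m. unfold fin_then.
  destruct (Nat.ltb_spec (m + length s) (length s)); [lia|].
  f_equal; lia.
Qed.

Lemma vit_trans : forall i j a b g, vit i a b -> vit j b g -> vit (i + j) a g.
Proof.
  induction i; induction j; intros a b g H1 H2;
  apply vit_alt in H1; apply vit_alt in H2; apply vit_alt;
  destruct H1 as [n1 H1]; destruct H2 as [n2 H2]; exists (n1 + n2);
  intros m Hm E.
  - destruct (Nat.eq_dec (a m) (b m)) as [E1|E1].
    + apply (H2 m); [lia|]. rewrite <- E1; exact E.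
    + apply (H1 m); [lia|exact E1].
  - destruct (Nat.eq_dec (a m) (b m)) as [E1|E1].
    + simpl. apply (IHj a b g); [apply vit_alt; exists n1; exact H1|].
      apply (H2 m); [lia|]. rewrite <- E1; exact E.
    + destruct (H1 m ltac:(lia) E1).
  - destruct (Nat.eq_dec (a m) (b m)) as [E1|E1].
    + destruct (Nat.eq_dec (b m) (g m)) as [E2|E2].
      * exfalso; apply E; congruence.
      * destruct (H2 m ltac:(lia) E2).
    + simpl. rewrite Nat.add_0_r. replace i with (i + 0) by lia.
      apply (IHi 0 a b g); [exact (H1 m ltac:(lia) E1)|].
      apply vit_alt; exists n2; exact H2.
  - destruct (Nat.eq_dec (a m) (b m)) as [E1|E1].
    + destruct (Nat.eq_dec (b m) (g m)) as [E2|E2].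
      * exfalso; apply E; congruence.
      * simpl. replace (i + S j) with (S i + j) by lia.
        apply (IHj a b g); [apply vit_alt; exists n1; exact H1|].
        exact (H2 m ltac:(lia) E2).
    + simpl. apply (IHi (S j) a b g); [exact (H1 m ltac:(lia) E1)|].
      apply vit_alt; exists n2; exact H2.
Qed.

Lemma vit_sym : forall k a b, vit k a b -> vit k b a.
Proof.
  induction k; intros a b H; apply vit_alt in H; apply vit_alt;
  destruct H as [n Hn]; exists n; intros m Hm E.
  - apply (Hn m Hm). congruence.
  - simpl. apply IHk. exact (Hn m Hm ltac:(congruence)).
Qed.

Fixpoint cnt (c : baire) (m : nat) : nat :=
  match m with 0 => 0 | S m' => cnt c m' + (if c m' =? 0 then 0 else 1) end.

Definition mk (K : nat) (g c : baire) : baire :=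
  fun m => if c m =? 0 then g m else if cnt c m <? K then S (g m) else g m.

Definition glue (L : nat) (s a : baire) : baire :=
  fun k => if k <? L then s k else a (k - L).

Lemma cnt_ext : forall c d m, (forall k, k < m -> c k = d k) -> cnt c m = cnt d m.
Proof.
  induction m; intros H; simpl; [reflexivity|].
  rewrite IHm by (intros; apply H; lia). rewrite (H m) by lia. reflexivity.
Qed.

Lemma cnt_mono : forall c m m', m <= m' -> cnt c m <= cnt c m'.
Proof.
  intros c m m' H; induction H; simpl; lia.
Qed.

Lemma mk_ext : forall K g c d, (forall k, c k = d k) -> forall m, mk K g c m = mk K g d m.
Proof.
  intros K g c d H m. unfold mk. rewrite (H m).
  rewrite (cnt_ext c d m) by (intros; apply H). reflexivity.
Qed.

Lemma mk_diff : forall K g c m, mk K g c m <> g m -> c m <> 0 /\ cnt c m < K.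
Proof.
  intros K g c m. unfold mk.
  destruct (Nat.eqb_spec (c m) 0); [tauto|].
  destruct (Nat.ltb_spec (cnt c m) K); [tauto|tauto].
Qed.

Lemma mk_pos : forall K g c k n, K <= k + cnt c (S n) -> vit k (mk K g c) g.
Proof.
  intros K g c. induction k; intros n Hk; apply vit_alt; exists n; intros m Hm E;
  apply mk_diff in E; destruct E as [E1 E2].
  - pose proof (cnt_mono c (S n) m Hm). lia.
  - simpl. apply (IHk m). pose proof (cnt_mono c (S n) m Hm). simpl.
    destruct (Nat.eqb_spec (c m) 0); [contradiction|]. lia.
Qed.

Lemma cnt_glue : forall L c b P, (forall j, j < P -> b j = 0) ->
  forall j, j <= P -> cnt (glue L c b) (L + j) = cnt c L.
Proof.
  intros L c b P Hb. induction j; intro Hj.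
  - rewrite Nat.add_0_r. apply cnt_ext. intros k Hk. unfold glue.
    destruct (Nat.ltb_spec k L); [reflexivity|lia].
  - replace (L + S j) with (S (L + j)) by lia. simpl. rewrite IHj by lia.
    unfold glue. destruct (Nat.ltb_spec (L + j) L); [lia|].
    replace (L + j - L) with j by lia. rewrite Hb by lia. simpl. lia.
Qed.

Lemma mk_differs : forall K g c m, c m <> 0 -> cnt c m < K -> mk K g c m <> g m.
Proof.
  intros K g c m H1 H2. unfold mk.
  destruct (Nat.eqb_spec (c m) 0); [contradiction|].
  destruct (Nat.ltb_spec (cnt c m) K); [lia|lia].
Qed.

Lemma mk_step : BCP -> forall K g k c0 L, cnt c0 L < K ->
  (forall a, vit k (mk K g (glue L c0 a)) g) ->
  exists P, forall a, W k (mk K g (glue L c0 (glue (S P) (fun j => if j =? P then 1 else 0) a))) g.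
Proof.
  intros bcp K g k c0 L HK H.
  pose (R := fun a n => forall m, n < m -> mk K g (glue L c0 a) m <> g m ->
                 W k (mk K g (glue L c0 a)) g).
  destruct (bcp R (fun a => proj1 (vit_alt _ _ _) (H a)) (fun _ => 0)) as [M [N HMN]].
  exists (M + N + 1). set (P := M + N + 1).
  intro a; apply (HMN _) with (m := L + P).
  - intros q Hq; unfold glue.
    destruct (Nat.ltb_spec q (S P)); [|lia].
    destruct (Nat.eqb_spec q P); [lia|reflexivity].
  - lia.
  - apply mk_differs.
    + unfold glue; destruct (Nat.ltb_spec (L + P) L); [lia|].
      replace (L + P - L) with P by lia.
      destruct (Nat.ltb_spec P (S P)); [|lia].
      rewrite Nat.eqb_refl; discriminate.
    + rewrite (cnt_glue L c0 _ P); [lia| |lia].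
      intros j Hj; unfold glue.
      destruct (Nat.ltb_spec j (S P)); [|lia].
      destruct (Nat.eqb_spec j P); [lia|reflexivity].
Qed.

Lemma mk_neg : BCP -> forall K g k c0 L, k + cnt c0 L < K ->
  ~ (forall a, vit k (mk K g (glue L c0 a)) g).
Proof.
  intros bcp K g. induction k; intros c0 L HK H;
  destruct (mk_step bcp K g _ c0 L ltac:(lia) H) as [P Hb].
  - exact (Hb (fun _ => 0)).
  - simpl in Hb. set (bP := fun j => if j =? P then 1 else 0) in Hb.
    apply (IHk (glue L c0 bP) (L + S P)).
    + replace (L + S P) with (S (L + P)) by lia. simpl.
      rewrite (cnt_glue L c0 bP P); [| |lia].
      * unfold glue. destruct (Nat.ltb_spec (L + P) L); [lia|].
        replace (L + P - L) with P by lia. unfold bP. rewrite Nat.eqb_refl. simpl. lia.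
      * intros j Hj. unfold bP. destruct (Nat.eqb_spec j P); [lia|reflexivity].
    + intro a. apply (vit_ext k (mk K g (glue L c0 (glue (S P) bP a))) g); [|reflexivity|exact (Hb a)].
      apply mk_ext. intro q. unfold glue.
      destruct (Nat.ltb_spec q L); destruct (Nat.ltb_spec q (L + S P));
      destruct (Nat.ltb_spec (q - L) (S P)); try lia; try reflexivity.
      f_equal. lia.
Qed.

Theorem theorem10p2 :
  BCP ->
  (forall (i n : nat) (s t : list nat) (a b : baire),
      length s = n -> length t = n ->
      (vit i (fin_then s a) (fin_then t b) <-> vit i a b))
  /\ (forall (i : nat) (a b : baire), vit i a b -> vit (S i) a b)
  /\ (forall (i : nat) (g : baire),
      ~ (forall a : baire, vit (S i) a g -> vit i a g))
  /\ (forall (i j : nat) (a b g : baire),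
      vit i a b /\ vit j b g -> vit (i + j) a g)
  /\ Equivalence vit_omega.
Proof.
  intro bcp. split; [|split; [|split; [|split]]].
  - intros i n s t a b Hs Ht. apply (vit_shift i n).
    + intro m. subst n. apply fin_then_tail.
    + intro m. rewrite <- Ht. apply fin_then_tail.
  - intros i a b H. exists 0. intros; exact H.
  - intros i g H. apply (mk_neg bcp (S i) g i (fun _ => 0) 0); [simpl; lia|].
    intro a. apply H. apply (mk_pos (S i) g _ (S i) 0). lia.
  - intros i j a b g [H1 H2]. exact (vit_trans i j a b g H1 H2).
  - split.
    + intro a. exists 0. exists 0. intros; reflexivity.
    + intros a b [i H]. exists i. apply vit_sym; exact H.
    + intros a b c [i H1] [j H2]. exists (i + j). exact (vit_trans i j a b c H1 H2).
Qed.
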